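(* Let $\Gamma$ be a green Veldkamp quadrangle with point set $P$, and let $a,b\in P$ with ${\rm dist}(a,b)=4$ such that $a$ and $b$ are not opposite. Then $a^{\rm op}=b^{\rm op}$ and $\Gamma_2(a)=\Gamma_2(b)$.
   Context: A graph is a pair $(V,E)$ with $E$ a set of $2$-element subsets of $V$; $\Gamma_v$ is the set of neighbors of $v$; $\Gamma_m(v)=\{u\mid {\rm dist}(u,v)=m\}$. An $s$-path is a sequence $(x_0,\dots,x_s)$ of vertices with consecutive vertices adjacent and $x_{i-2}\ne x_i$ for $i\in[2,s]$. A closed $s$-path is an $s$-path with $s\ge3$ whose first and last vertices coincide; an $s$-circuit is the subgraph determined by a closed $s$-path. An opposition relation on a set $X$ is a symmetric anti-reflexive relation; trivial if any two distinct elements are related; $k$-plump if for every $S\subseteq X$ with $|S|\le k$ some element of $X$ is related to all elements of $S$. A Veldkamp graph is a graph with a $2$-plump opposition relation $\equiv_v$ on $\Gamma_v$ for each vertex $v$. A path $(v_0,\dots,v_s)$ is straight if $v_{i-1}\equiv_{v_i}v_{i+1}$ for all $i\in[1,s-1]$; a circuit is straight if every path in it is straight. A Veldkamp $n$-gon ($n\ge2$) is a Veldkamp graph satisfying (VP1) connected and bipartite; (VP2) for each $k\in[1,n-1]$ each straight $k$-path is the unique straight path between its endpoints of length at most $k$; (VP3) every straight $(n+1)$-path lies in a straight $2n$-circuit. A root is a straight $n$-path; two vertices are opposite if there is a root between them; $x^{\rm op}$ is the set of vertices opposite $x$. A Veldkamp quadrangle is a Veldkamp $4$-gon, with bipartition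 classes called points $P$ and lines $L$; it is green if $\equiv_x$ is trivial for every line $x$. *)

(* Defs.v *)
From Stdlib Require Import List Arith.
Import ListNotations.
Set Implicit Arguments.

Section Veldkamp.
Variable V : Type.
Variable adj : V -> V -> Prop.
(* opp v x y  means  x ≡_v y  (an opposition relation on Γ_v) *)
Variable opp : V -> V -> V -> Prop.

Definition simple_graph : Prop :=
  (forall x y, adj x y -> adj y x) /\ (forall x, ~ adj x x).

Definition is_walk (m : nat) (w : nat -> V) : Prop :=
  forall i, i < m -> adj (w i) (w (S i)).

Definition dist (u v : V) (m : nat) : Prop :=
  (exists w, w 0 = u /\ w m = v /\ is_walk m w) /\
  (forall m', m' < m -> ~ exists w, w 0 = u /\ w m' = v /\ is_walk m' w).

Definition connected : Prop :=
  forall u v, exists m w, w 0 = u /\ w m = v /\ is_walk m w.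

Definition bipartition (col : V -> bool) : Prop :=
  forall x y, adj x y -> col x <> col y.

Definition bipartite : Prop := exists col, bipartition col.

Definition is_path (s : nat) (x : nat -> V) : Prop :=
  is_walk s x /\ (forall i, 2 <= i <= s -> x (i - 2) <> x i).

Definition opposition_rel (X : V -> Prop) (R : V -> V -> Prop) : Prop :=
  (forall x y, R x y -> X x /\ X y) /\
  (forall x y, R x y -> R y x) /\
  (forall x, ~ R x x).

Definition trivial_rel (X : V -> Prop) (R : V -> V -> Prop) : Prop :=
  forall x y, X x -> X y -> x <> y -> R x y.

Definition plump (k : nat) (X : V -> Prop) (R : V -> V -> Prop) : Prop :=
  forall S : list V, length S <= k -> (forall y, In y S -> X y) ->
    exists x, X x /\ forall y, In y S -> R x y.

Definition nbhd (v : V) : V -> Prop := fun u => adj v u.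

Definition veldkamp_graph : Prop :=
  simple_graph /\
  forall v, opposition_rel (nbhd v) (opp v) /\ plump 2 (nbhd v) (opp v).

Definition straight (s : nat) (x : nat -> V) : Prop :=
  forall i, 1 <= i -> i <= s - 1 -> opp (x i) (x (i - 1)) (x (S i)).

Definition closed_path (s : nat) (c : nat -> V) : Prop :=
  is_path s c /\ 3 <= s /\ c 0 = c s.

Definition circ_edge (s : nat) (c : nat -> V) (u v : V) : Prop :=
  exists i, i < s /\ ((u = c i /\ v = c (S i)) \/ (v = c i /\ u = c (S i))).

Definition circ_vertex (s : nat) (c : nat -> V) (u : V) : Prop :=
  exists i, i <= s /\ u = c i.

Definition straight_circuit (s : nat) (c : nat -> V) : Prop :=
  forall m p, is_path m p -> circ_vertex s c (p 0) ->
    (forall i, i < m -> circ_edge s c (p i) (p (S i))) -> straight m p.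

Definition path_in_circuit (t : nat) (x : nat -> V) (s : nat) (c : nat -> V) : Prop :=
  (forall i, i <= t -> circ_vertex s c (x i)) /\
  (forall i, i < t -> circ_edge s c (x i) (x (S i))).

Definition veldkamp_ngon (n : nat) : Prop :=
  2 <= n /\ veldkamp_graph /\
  connected /\ bipartite /\
  (* VP2 *) (forall k, 1 <= k <= n - 1 -> forall x, is_path k x -> straight k x ->
      forall m y, m <= k -> is_path m y -> straight m y ->
        y 0 = x 0 -> y m = x k -> m = k /\ forall i, i <= k -> y i = x i) /\
  (* VP3 *) (forall x, is_path (S n) x -> straight (S n) x ->
      exists c, closed_path (2 * n) c /\ straight_circuit (2 * n) c /\
                path_in_circuit (S n) x (2 * n) c).

Definition root (n : nat) (x : nat -> V) : Prop := is_path n x /\ straight n x.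

Definition opposite (n : nat) (a b : V) : Prop :=
  exists x, root n x /\ x 0 = a /\ x n = b.

(* Veldkamp quadrangle with points = {x | pt x = true}, lines = the rest *)
Definition green (pt : V -> bool) : Prop :=
  forall x, pt x = false -> trivial_rel (nbhd x) (opp x).

End Veldkamp.

(* Main.v *)
Require Import Defs.
From Stdlib Require Import List Arith Lia Classical.
Import ListNotations.

Ltac modlia := repeat match goal with
 | |- context [?t mod 8] => let q := fresh "q" in let r := fresh "r" in
     pose proof (Nat.div_mod_eq t 8); pose proof (Nat.mod_upper_bound t 8 ltac:(lia));
     set (r := t mod 8) in *; set (q := t / 8) in *; clearbody r q
 | H : context [?t mod 8] |- _ => let q := fresh "q" in let r := fresh "r" in
     pose proof (Nat.div_mod_eq t 8); pose proof (Nat.mod_upper_bound t 8 ltac:(lia));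
     set (r := t mod 8) in *; set (q := t / 8) in *; clearbody r q
 end; lia.

Section Main.
Variable V : Type.
Variable adj : V -> V -> Prop.
Variable opp : V -> V -> V -> Prop.
Variable pt : V -> bool.
Hypothesis HV : veldkamp_ngon adj opp 4.
Hypothesis Hbip : bipartition adj pt.
Hypothesis Hgr : green adj opp pt.

Lemma adj_sym : forall x y, adj x y -> adj y x.
Proof. destruct HV as [_ [[[Hs _] _] _]]. auto. Qed.
Lemma adj_irr : forall x, ~ adj x x.
Proof. destruct HV as [_ [[[_ Hs] _] _]]. auto. Qed.
Lemma opp_loc : forall v, opposition_rel (nbhd adj v) (opp v) /\ plump 2 (nbhd adj v) (opp v).
Proof. destruct HV as [_ [[_ H] _]]. auto. Qed.
Lemma opp_nb : forall v x y, opp v x y -> adj v x /\ adj v y.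
Proof. intros v x y H. destruct (opp_loc v) as [[H1 _] _]. apply H1; auto. Qed.
Lemma opp_sym : forall v x y, opp v x y -> opp v y x.
Proof. intros v x y H. destruct (opp_loc v) as [[_ [H1 _]] _]. auto. Qed.
Lemma opp_neq : forall v x y, opp v x y -> x <> y.
Proof. intros v x y H E. subst. destruct (opp_loc v) as [[_ [_ H1]] _]. eapply H1; eauto. Qed.
Lemma plump2 : forall v y z, adj v y -> adj v z -> exists x, adj v x /\ opp v x y /\ opp v x z.
Proof.
  intros v y z Hy Hz. destruct (opp_loc v) as [_ Hp].
  destruct (Hp [y; z]) as [x [Hx Hs]].
  - simpl; lia.
  - intros w [<-|[<-|[]]]; auto.
  - exists x. split; [exact Hx|]. split; apply Hs; simpl; auto.
Qed.
Lemma pt_flip : forall u v, adj u v -> pt v = negb (pt u).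
Proof. intros u v H. pose proof (Hbip u v H). destruct (pt u), (pt v); simpl; congruence. Qed.
Lemma ptF : forall u v, adj u v -> pt u = true -> pt v = false.
Proof. intros u v H H1. rewrite (pt_flip _ _ H), H1. reflexivity. Qed.
Lemma ptT : forall u v, adj u v -> pt u = false -> pt v = true.
Proof. intros u v H H1. rewrite (pt_flip _ _ H), H1. reflexivity. Qed.
Lemma green_opp : forall l x y, pt l = false -> adj l x -> adj l y -> x <> y -> opp l x y.
Proof. intros l x y H1 H2 H3 H4. apply (Hgr l H1); auto. Qed.
Lemma vp2 : forall k, 1 <= k <= 3 -> forall x, is_path adj k x -> straight opp k x ->
   forall m y, m <= k -> is_path adj m y -> straight opp m y ->
   y 0 = x 0 -> y m = x k -> m = k /\ forall i, i <= k -> y i = x i.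
Proof. destruct HV as [_ [_ [_ [_ [H _]]]]]. intros k Hk. apply H. simpl. lia. Qed.
Lemma vp3 : forall x, is_path adj 5 x -> straight opp 5 x ->
      exists c, closed_path adj 8 c /\ straight_circuit adj opp 8 c /\
                path_in_circuit 5 x 8 c.
Proof. destruct HV as [_ [_ [_ [_ [_ H]]]]]. exact H. Qed.

Definition p3 (a b c : V) : nat -> V := fun i => match i with 0 => a | 1 => b | _ => c end.
Definition p4 (a b c d : V) : nat -> V :=
  fun i => match i with 0 => a | 1 => b | 2 => c | _ => d end.
Definition p5 (a b c d e : V) : nat -> V :=
  fun i => match i with 0 => a | 1 => b | 2 => c | 3 => d | _ => e end.
Definition p6 (a b c d e f : V) : nat -> V :=
  fun i => match i with 0 => a | 1 => b | 2 => c | 3 => d | 4 => e | _ => f end.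

Ltac tpath := split;
  [ intros i Hi; do 7 (destruct i as [|i]; [simpl; first [lia | assumption | apply adj_sym; assumption] |]); lia
  | intros i [Hi1 Hi2]; do 7 (destruct i as [|i]; [simpl; first [lia | assumption | apply not_eq_sym; assumption] |]); lia ].
Ltac gtac := apply green_opp; try assumption; try (apply adj_sym; assumption); try (apply not_eq_sym; assumption).
Ltac tstraight := intros i Hi1 Hi2; do 7 (destruct i as [|i]; [simpl; first [lia | assumption | apply opp_sym; assumption] |]); lia.

Lemma circ_edge_sym : forall (c : nat -> V) u v, circ_edge 8 c u v -> circ_edge 8 c v u.
Proof. intros c u v [i [Hi [[H1 H2]|[H1 H2]]]]; exists i; split; auto. Qed.

Section Circ.
Variable c : nat -> V.
Hypothesis Hc : closed_path adj 8 c.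
Hypothesis Hsc : straight_circuit adj opp 8 c.
Definition cc i := c (i mod 8).
Lemma cc_mod : forall a b, a mod 8 = b mod 8 -> cc a = cc b.
Proof. unfold cc. intros a b ->. reflexivity. Qed.
Lemma c_lt : forall i, i < 8 -> c i = cc i.
Proof. intros i Hi. unfold cc. rewrite Nat.mod_small; auto. Qed.
Lemma c_8 : c 8 = cc 8.
Proof. unfold cc. change (8 mod 8) with 0. destruct Hc as [_ [_ H]]. auto. Qed.
Lemma c_S : forall i, i < 8 -> c (S i) = cc (S i).
Proof. intros i Hi. destruct (Nat.eq_dec i 7). subst; apply c_8. apply c_lt; lia. Qed.
Lemma c_walk : forall j, j < 8 -> adj (c j) (c (S j)).
Proof. destruct Hc as [[H _] _]. auto. Qed.
Lemma c_nb : forall j, 2 <= j <= 8 -> c (j-2) <> c j.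
Proof. destruct Hc as [[_ H] _]. auto. Qed.
Lemma cc_walk : forall i, adj (cc i) (cc (S i)).
Proof.
  intros i. unfold cc at 1. rewrite <- (@cc_mod (S (i mod 8))) by modlia.
  rewrite <- c_S by modlia. apply c_walk. modlia.
Qed.
Lemma cc_edge : forall i, circ_edge 8 c (cc i) (cc (S i)).
Proof.
  intros i. exists (i mod 8). split; [modlia|]. left. split; [reflexivity|].
  rewrite c_S by modlia. apply cc_mod. modlia.
Qed.
Lemma cc_vertex : forall i, circ_vertex 8 c (cc i).
Proof. intros i. exists (i mod 8). split; [modlia|reflexivity]. Qed.

Lemma wrap : c 1 <> c 7.
Proof.
  intro E.
  assert (Hp : is_path adj 3 (p4 (c 4) (c 5) (c 6) (c 7))).
  { pose proof (c_walk 4 ltac:(lia)). pose proof (c_walk 5 ltac:(lia)). pose proof (c_walk 6 ltac:(lia)).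
    pose proof (c_nb 6 ltac:(lia)). pose proof (c_nb 7 ltac:(lia)). simpl in *. tpath. }
  assert (Hq : is_path adj 3 (p4 (c 4) (c 3) (c 2) (c 1))).
  { pose proof (c_walk 3 ltac:(lia)). pose proof (c_walk 2 ltac:(lia)). pose proof (c_walk 1 ltac:(lia)).
    pose proof (c_nb 4 ltac:(lia)). pose proof (c_nb 3 ltac:(lia)). simpl in *. tpath. }
  assert (Sp : straight opp 3 (p4 (c 4) (c 5) (c 6) (c 7))).
  { apply Hsc; auto. exists 4; split; [lia|reflexivity].
    intros i Hi. destruct i as [|[|[|]]]; try lia; simpl.
    exists 4; split; [lia|left; auto]. exists 5; split; [lia|left; auto].
    exists 6; split; [lia|left; auto]. }
  assert (Sq : straight opp 3 (p4 (c 4) (c 3) (c 2) (c 1))).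
  { apply Hsc; auto. exists 4; split; [lia|reflexivity].
    intros i Hi. destruct i as [|[|[|]]]; try lia; simpl.
    exists 3; split; [lia|right; auto]. exists 2; split; [lia|right; auto].
    exists 1; split; [lia|right; auto]. }
  destruct (@vp2 3 ltac:(lia) _ Hp Sp 3 _ ltac:(lia) Hq Sq eq_refl) as [_ H].
  simpl; auto.
  specialize (H 1 ltac:(lia)). simpl in H. apply (c_nb 5); auto; lia.
Qed.

Lemma cc_nb : forall i, cc i <> cc (i + 2).
Proof.
  intros i. assert (Hr : i mod 8 < 8) by modlia.
  destruct (le_lt_dec (i mod 8) 5) as [H5|H5].
  - unfold cc at 1. rewrite (@cc_mod (i+2) (i mod 8 + 2)) by modlia.
    rewrite <- c_lt by lia. pose proof (c_nb (i mod 8 + 2) ltac:(lia)) as H.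
    replace (i mod 8 + 2 - 2) with (i mod 8) in H by lia. exact H.
  - destruct (Nat.eq_dec (i mod 8) 6) as [E|E].
    + unfold cc at 1. rewrite E. rewrite (@cc_mod (i+2) 8) by modlia. rewrite <- c_8.
      exact (c_nb 8 ltac:(lia)).
    + assert (E7 : i mod 8 = 7) by lia.
      unfold cc at 1. rewrite E7. rewrite (@cc_mod (i+2) 1) by modlia.
      rewrite <- c_lt by lia. intro H. apply wrap. auto.
Qed.

Definition W (s e k : nat) := cc (s + e * k).

Lemma W_edge : forall s e k, e = 1 \/ e = 7 ->
  adj (W s e k) (W s e (S k)) /\ circ_edge 8 c (W s e k) (W s e (S k)).
Proof.
  intros s e k [-> | ->]; unfold W.
  - replace (s + 1 * S k) with (S (s + 1 * k)) by lia. split; [apply cc_walk|apply cc_edge].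
  - rewrite (@cc_mod (s + 7 * k) (S (s + 7 * k + 7))) by modlia.
    replace (s + 7 * S k) with (s + 7 * k + 7) by lia.
    split; [apply adj_sym, cc_walk | apply circ_edge_sym, cc_edge].
Qed.

Lemma W_nb : forall s e k, e = 1 \/ e = 7 -> W s e k <> W s e (k + 2).
Proof.
  intros s e k [-> | ->]; unfold W.
  - replace (s + 1 * (k + 2)) with ((s + 1 * k) + 2) by lia. apply cc_nb.
  - rewrite (@cc_mod (s + 7 * k) (s + 7 * (k + 2) + 2)) by modlia.
    apply not_eq_sym, cc_nb.
Qed.

Lemma W_path : forall s e m, e = 1 \/ e = 7 -> is_path adj m (W s e).
Proof.
  intros s e m He. split.
  - intros i Hi. apply W_edge; auto.
  - intros i Hi. replace i with (i - 2 + 2) at 2 by lia. apply W_nb; auto.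
Qed.

Lemma W_straight : forall s e m, e = 1 \/ e = 7 -> straight opp m (W s e).
Proof.
  intros s e m He. apply Hsc. apply W_path; auto. apply cc_vertex.
  intros i Hi. apply W_edge; auto.
Qed.

Lemma ptcc : forall i, pt (cc (S i)) = negb (pt (cc i)).
Proof. intros i. apply pt_flip, cc_walk. Qed.

Lemma cc_neq_g : forall i g, 1 <= g <= 7 -> cc i <> cc (i + g).
Proof.
  intros i g Hg E.
  destruct g as [|[|[|[|[|[|[|[|]]]]]]]]; try lia.
  - rewrite Nat.add_1_r in E. apply (adj_irr (cc i)). rewrite E at 2. apply cc_walk.
  - exact (cc_nb i E).
  - replace (i + 3) with (S (S (S i))) in E by lia.
    assert (pt (cc i) = pt (cc (S (S (S i))))) by (rewrite E; auto).
    rewrite !ptcc in H. destruct (pt (cc i)); discriminate.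
  - destruct (@vp2 2 ltac:(lia) (W (i+2) 7) (W_path (i+2) 7 2 (or_intror eq_refl)) (W_straight (i+2) 7 2 (or_intror eq_refl))
       2 (W (i+2) 1) ltac:(lia) (W_path (i+2) 1 2 (or_introl eq_refl)) (W_straight (i+2) 1 2 (or_introl eq_refl))) as [_ H].
    + reflexivity.
    + unfold W. rewrite (@cc_mod (i + 2 + 1 * 2) (i + 4)) by modlia. rewrite <- E.
      apply cc_mod. modlia.
    + specialize (H 1 ltac:(lia)). unfold W in H.
      rewrite (@cc_mod (i + 2 + 7 * 1) (i + 1)) in H by modlia.
      replace (i + 2 + 1 * 1) with (i + 1 + 2) in H by lia.
      exact (cc_nb (i+1) (eq_sym H)).
  - replace (i + 5) with (S (S (S (S (S i))))) in E by lia.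
    assert (pt (cc i) = pt (cc (S (S (S (S (S i))))))) by (rewrite E; auto).
    rewrite !ptcc in H. destruct (pt (cc i)); discriminate.
  - apply (cc_nb (i + 6)). rewrite <- E. apply cc_mod. modlia.
  - replace (i + 7) with (S (S (S (S (S (S (S i))))))) in E by lia.
    assert (pt (cc i) = pt (cc (S (S (S (S (S (S (S i))))))))) by (rewrite E; auto).
    rewrite !ptcc in H. destruct (pt (cc i)); discriminate.
Qed.

Lemma cc_inj : forall i j, cc i = cc j -> i mod 8 = j mod 8.
Proof.
  intros i j E.
  destruct (lt_eq_lt_dec (i mod 8) (j mod 8)) as [[H|H]|H]; auto; exfalso.
  - apply (@cc_neq_g i (j mod 8 - i mod 8)). modlia.
    rewrite E. apply cc_mod. modlia.
  - apply (@cc_neq_g j (i mod 8 - j mod 8)). modlia.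
    rewrite <- E. apply cc_mod. modlia.
Qed.

Lemma step : forall u v p, u = cc p -> circ_edge 8 c u v -> v = cc (S p) \/ v = cc (p + 7).
Proof.
  intros u v p Hu [i [Hi [[E1 E2]|[E1 E2]]]]; subst.
  - left. rewrite c_lt in E1 by lia. apply cc_inj in E1.
    rewrite c_S by lia. apply cc_mod. modlia.
  - right. rewrite c_S in E2 by lia. apply cc_inj in E2.
    rewrite c_lt by lia. apply cc_mod. modlia.
Qed.

Lemma locate_gen : forall x s e, e = 1 \/ e = 7 -> is_path adj 5 x -> path_in_circuit 5 x 8 c ->
  x 0 = W s e 0 -> x 1 = W s e 1 ->
  forall k, k <= 4 -> x k = W s e k /\ x (S k) = W s e (S k).
Proof.
  intros x s e He [Hw Hnb] [Hv Hed] H0 H1 k. induction k as [|k IH]; intros Hk.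
  - auto.
  - destruct IH as [IH1 IH2]; [lia|]. split; auto.
    destruct (@step _ _ (s + e * S k) IH2 (Hed (S k) ltac:(lia))) as [E|E];
    pose proof (Hnb (S (S k)) ltac:(lia)) as Hn; replace (S (S k) - 2) with k in Hn by lia; rewrite IH1 in Hn;
    destruct He as [-> | ->]; unfold W in *.
    + rewrite E. f_equal. lia.
    + exfalso. apply Hn. rewrite E. apply cc_mod. modlia.
    + exfalso. apply Hn. rewrite E. apply cc_mod. modlia.
    + rewrite E. f_equal. lia.
Qed.

Lemma locate : forall x, is_path adj 5 x -> path_in_circuit 5 x 8 c ->
  exists s e, (e = 1 \/ e = 7) /\ forall k, k <= 5 -> x k = W s e k.
Proof.
  intros x Hp Hin. pose proof Hin as [Hv Hed].
  destruct (Hv 0 ltac:(lia)) as [j [Hj E0]].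
  assert (E0' : x 0 = cc j).
  { rewrite E0. destruct (Nat.eq_dec j 8). subst; apply c_8. apply c_lt; lia. }
  assert (G : forall e, e = 1 \/ e = 7 -> x 1 = W j e 1 ->
     exists s e, (e = 1 \/ e = 7) /\ forall k, k <= 5 -> x k = W s e k).
  { intros e He E1. exists j, e. split; auto.
    assert (E0'' : x 0 = W j e 0) by (unfold W; rewrite E0'; f_equal; lia).
    pose proof (@locate_gen x j e He Hp Hin E0'' E1) as L.
    intros k Hk. destruct (le_lt_dec k 4). apply L; auto.
    replace k with (S 4) by lia. apply L; lia. }
  destruct (@step _ _ j E0' (Hed 0 ltac:(lia))) as [E|E].
  - apply (G 1); [auto|]. unfold W. rewrite E. f_equal; lia.
  - apply (G 7); [auto|]. unfold W. rewrite E. f_equal; lia.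
Qed.
End Circ.

Lemma AL : forall x, is_path adj 5 x -> straight opp 5 x ->
  exists u6 u7, adj (x 5) u6 /\ adj u6 u7 /\ adj u7 (x 0) /\ opp u6 (x 5) u7 /\
     opp (x 0) (x 1) u7 /\ u6 <> x 4 /\ u6 <> x 0.
Proof.
  intros x Hp Hs. destruct (vp3 x Hp Hs) as [c [Hc [Hsc Hin]]].
  destruct (locate c Hc Hsc x Hp Hin) as [s [e [He Hx]]].
  assert (W8 : W c s e 8 = W c s e 0) by (unfold W; apply cc_mod; modlia).
  assert (W9 : W c s e 9 = W c s e 1) by (unfold W; apply cc_mod; modlia).
  pose proof (fun k => W_edge c Hc s e k He) as WE.
  pose proof (fun m => W_straight c Hc Hsc s e m He) as WS.
  pose proof (fun k => W_nb c Hc Hsc s e k He) as WN.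
  exists (W c s e 6), (W c s e 7).
  rewrite !Hx by lia.
  split; [apply WE|].
  split; [apply WE|].
  split; [rewrite <- W8; apply WE|].
  split; [apply (WS 8 6); lia|].
  split; [rewrite <- W8, <- W9; apply opp_sym, (WS 9 8); lia|].
  split.
  - apply not_eq_sym. apply (WN 4).
  - rewrite <- W8. apply (WN 6).
Qed.

Lemma S6 : forall x0 x1 x2 x3 x4 x5 b,
  is_path adj 5 (p6 x0 x1 x2 x3 x4 x5) -> straight opp 5 (p6 x0 x1 x2 x3 x4 x5) ->
  pt x0 = true -> adj x5 b -> (forall Y, ~ (adj x0 Y /\ adj Y b)) -> opposite adj opp 4 x0 b.
Proof.
  intros x0 x1 x2 x3 x4 x5 b Hp Hs Hpt Hb NC.
  destruct (AL _ Hp Hs) as (u6 & u7 & H1 & H2 & H3 & H4 & H5 & H6 & H7). simpl in *.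
  destruct (classic (u6 = b)) as [E|E].
  { subst. exfalso; apply (NC u7); split; apply adj_sym; auto. }
  assert (P7: pt u7 = false) by (apply (ptF x0); [apply adj_sym|]; auto).
  assert (P6: pt u6 = true) by (apply (ptT u7); [apply adj_sym|]; auto).
  assert (P5: pt x5 = false) by (apply (ptF u6); [apply adj_sym|]; auto).
  assert (g1 : opp u7 x0 u6) by gtac.
  assert (g3 : opp x5 u6 b) by gtac.
  assert (n1 : x5 <> u7) by (eapply opp_neq; eauto).
  exists (p5 x0 u7 u6 x5 b). split; [split; [tpath | tstraight] | simpl; auto].
Qed.

Lemma L1 : forall a L c M b K, adj a L -> adj L c -> adj c M -> adj M b -> a <> c -> L <> M ->
  c <> b -> opp c L M -> pt a = true -> a <> b -> adj a K -> adj K b -> False.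
Proof.
  intros a L c M b K HaL HLc HcM HMb Hac HLM Hcb Oc Pa Hab HaK HKb.
  assert (PL : pt L = false) by (apply (ptF a); auto).
  assert (Pc : pt c = true) by (apply (ptT L); auto).
  assert (PM : pt M = false) by (apply (ptF c); auto).
  destruct (plump2 a L K HaL HaK) as [K2 [HK2 [O1 O2]]].
  assert (oM : opp M c b) by gtac.
  assert (oL : opp L c a) by gtac.
  assert (nLK2 : K2 <> L) by (eapply opp_neq; eauto).
  assert (Hp : is_path adj 5 (p6 b M c L a K2)) by tpath.
  assert (Hs : straight opp 5 (p6 b M c L a K2)) by tstraight.
  destruct (AL _ Hp Hs) as (u6 & u7 & H1 & H2 & H3 & H4 & H5 & H6 & H7). simpl in *.
  assert (nKK : K2 <> K) by (eapply opp_neq; eauto).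
  assert (PK : pt K = false) by (apply (ptF a); auto).
  assert (oK : opp K a b) by gtac.
  assert (PK2 : pt K2 = false) by (apply (ptF a); auto).
  assert (Pu6 : pt u6 = true) by (apply (ptT K2); auto).
  assert (Pu7 : pt u7 = false) by (apply (ptF u6); auto).
  assert (ou7 : opp u7 u6 b) by gtac.
  assert (nK2u7 : K2 <> u7) by (eapply opp_neq; eauto).
  assert (HP : is_path adj 3 (p4 K2 a K b)) by tpath.
  assert (SP : straight opp 3 (p4 K2 a K b)) by tstraight.
  assert (HQ : is_path adj 3 (p4 K2 u6 u7 b)) by tpath.
  assert (SQ : straight opp 3 (p4 K2 u6 u7 b)) by tstraight.
  destruct (@vp2 3 ltac:(lia) _ HP SP 3 _ (le_n 3) HQ SQ eq_refl eq_refl) as [_ H].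
  apply H6. exact (H 1 ltac:(lia)).
Qed.

Lemma root_neq : forall a N p K x, adj a N -> adj N p -> adj p K -> adj K x -> a <> p -> N <> K ->
  pt a = true -> a <> x.
Proof.
  intros a N p K x HaN HNp HpK HKx Hap HNK Pa E. subst x.
  assert (PN : pt N = false) by (apply (ptF a); auto).
  assert (Pp : pt p = true) by (apply (ptT N); auto).
  assert (PK : pt K = false) by (apply (ptF p); auto).
  assert (oN : opp N p a) by gtac.
  assert (oK : opp K p a) by gtac.
  assert (HX : is_path adj 2 (p3 p N a)) by tpath.
  assert (SX : straight opp 2 (p3 p N a)) by tstraight.
  assert (HY : is_path adj 2 (p3 p K a)) by tpath.
  assert (SY : straight opp 2 (p3 p K a)) by tstraight.
  destruct (@vp2 2 ltac:(lia) _ HX SX 2 _ (le_n 2) HY SY eq_refl eq_refl) as [_ H].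
  apply HNK. symmetry. exact (H 1 ltac:(lia)).
Qed.

Lemma Core : forall a b c L M x N, pt a = true -> adj a L -> adj L c -> adj c M -> adj M b ->
  a <> c -> c <> b -> (forall Y, ~ (adj a Y /\ adj Y b)) -> ~ opposite adj opp 4 a b ->
  adj x N -> adj N a -> x <> a -> opp a N L -> exists T, adj x T /\ adj T b.
Proof.
  intros a b c L M x N Pa HaL HLc HcM HMb Hac Hcb NC NO HxN HNa Hxa oaNL.
  assert (PL : pt L = false) by (apply (ptF a); auto).
  assert (Pc : pt c = true) by (apply (ptT L); auto).
  assert (PM : pt M = false) by (apply (ptF c); auto).
  assert (PN : pt N = false) by (apply (ptF a); auto; apply adj_sym; auto).
  assert (Px : pt x = true) by (apply (ptT N); auto; apply adj_sym; auto).
  destruct (plump2 c L M ltac:(apply adj_sym; auto) HcM) as [K [HcK [oKL oKM]]].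
  assert (PK : pt K = false) by (apply (ptF c); auto).
  assert (gN : opp N x a) by gtac.
  assert (gL : opp L a c) by gtac.
  assert (nNL : N <> L) by (eapply opp_neq; eauto).
  assert (nKL : K <> L) by (eapply opp_neq; eauto).
  assert (nKM : K <> M) by (eapply opp_neq; eauto).
  assert (Hp1 : is_path adj 5 (p6 x N a L c K)) by tpath.
  assert (Hs1 : straight opp 5 (p6 x N a L c K)) by tstraight.
  destruct (AL _ Hp1 Hs1) as (d & R & H1 & H2 & H3 & oR & oxR & H6 & H7). simpl in *.
  assert (gM : opp M b c) by gtac.
  assert (gK : opp K c d) by gtac.
  assert (nKR : K <> R) by (eapply opp_neq; eauto).
  assert (Hp2 : is_path adj 5 (p6 b M c K d R)) by tpath.
  assert (Hs2 : straight opp 5 (p6 b M c K d R)) by tstraight.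
  destruct (AL _ Hp2 Hs2) as (e & T & J1 & J2 & J3 & oT & _ & J6 & J7). simpl in *.
  destruct (classic (e = x)) as [E|E].
  { subst e. exists T. auto. }
  exfalso. apply NO.
  assert (Pd : pt d = true) by (apply (ptT K); auto).
  assert (PR : pt R = false) by (apply (ptF d); auto).
  assert (gR : opp R x e) by gtac.
  assert (nNR : N <> R) by (eapply opp_neq; eauto).
  assert (nRT : R <> T) by (eapply opp_neq; eauto).
  assert (Hp3 : is_path adj 5 (p6 a N x R e T)) by tpath.
  assert (Hs3 : straight opp 5 (p6 a N x R e T)) by tstraight.
  exact (S6 _ _ _ _ _ _ _ Hp3 Hs3 Pa J3 NC).
Qed.

Lemma Gen : forall a b c L M x N, pt a = true -> adj a L -> adj L c -> adj c M -> adj M b ->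
  a <> c -> c <> b -> (forall Y, ~ (adj a Y /\ adj Y b)) -> ~ opposite adj opp 4 a b ->
  adj x N -> adj N a -> x <> a -> exists T, adj x T /\ adj T b.
Proof.
  intros a b c L M x N Pa HaL HLc HcM HMb Hac Hcb NC NO HxN HNa Hxa.
  destruct (plump2 a L N HaL ltac:(apply adj_sym; auto)) as [K [HaK [o1 o2]]].
  destruct (plump2 K a a ltac:(apply adj_sym; auto) ltac:(apply adj_sym; auto)) as [y [HKy [oy _]]].
  assert (nya : y <> a) by (eapply opp_neq; eauto).
  destruct (Core _ _ _ _ _ _ _ Pa HaL HLc HcM HMb Hac Hcb NC NO (adj_sym _ _ HKy) (adj_sym _ _ HaK) nya o1)
    as [T1 [HyT1 HT1b]].
  assert (nyb : y <> b) by (intro; subst; apply (NC K); auto).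
  apply (Core _ _ _ _ _ _ _ Pa HaK HKy HyT1 HT1b (not_eq_sym nya) nyb NC NO HxN HNa Hxa (opp_sym _ _ _ o2)).
Qed.

Lemma dist4_info : forall a b, dist adj a b 4 -> exists L c M, adj a L /\ adj L c /\ adj c M /\
  adj M b /\ a <> c /\ c <> b /\ (forall Y, ~ (adj a Y /\ adj Y b)) /\ a <> b.
Proof.
  intros a b [[w [H0 [H4 Hw]]] Hmin].
  assert (W2 : forall Y, adj a Y -> adj Y b -> False).
  { intros Y H1 H2. apply (Hmin 2 ltac:(lia)). exists (p3 a Y b).
    split; [reflexivity|split; [reflexivity|]].
    intros i Hi. destruct i as [|[|]]; simpl; auto; lia. }
  assert (A0 : adj a (w 1)) by (rewrite <- H0; apply Hw; lia).
  assert (A1 : adj (w 1) (w 2)) by (apply Hw; lia).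
  assert (A2 : adj (w 2) (w 3)) by (apply Hw; lia).
  assert (A3 : adj (w 3) b) by (rewrite <- H4; apply Hw; lia).
  exists (w 1), (w 2), (w 3). repeat split; auto.
  - intro E. apply (W2 (w 3)); auto. rewrite E; auto.
  - intro E. apply (W2 (w 1)); auto. rewrite <- E; auto.
  - intros Y [H1 H2]. eauto.
  - intro E. apply (Hmin 0 ltac:(lia)). exists (fun _ => a). split; auto. split; auto.
    intros i Hi; lia.
Qed.

Lemma rev_walk : forall m w, is_walk adj m w -> is_walk adj m (fun i => w (m - i)).
Proof.
  intros m w H i Hi. replace (m - i) with (S (m - S i)) by lia. apply adj_sym, H. lia.
Qed.

Lemma dist_sym : forall u v m, dist adj u v m -> dist adj v u m.
Proof.
  intros u v m [[w [H0 [Hm Hw]]] Hmin]. split.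
  - exists (fun i => w (m - i)). rewrite Nat.sub_0_r, Nat.sub_diag. auto using rev_walk.
  - intros m' Hm' [w' [H0' [Hm'' Hw']]]. apply (Hmin m' Hm').
    exists (fun i => w' (m' - i)). rewrite Nat.sub_0_r, Nat.sub_diag. auto using rev_walk.
Qed.

Lemma opposite_sym : forall a b, opposite adj opp 4 a b -> opposite adj opp 4 b a.
Proof.
  intros a b [x [[[Hw Hnb] Hs] [H0 H4]]]. exists (fun i => x (4 - i)).
  split; [split; [split|]|].
  - apply rev_walk; auto.
  - intros i [Hi1 Hi2]. destruct i as [|[|[|[|[|]]]]]; try lia; simpl.
    + pose proof (Hnb 4 ltac:(lia)). simpl in *. auto.
    + pose proof (Hnb 3 ltac:(lia)). simpl in *. auto.
    + pose proof (Hnb 2 ltac:(lia)). simpl in *. auto.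
  - intros i Hi1 Hi2. destruct i as [|[|[|[|]]]]; try lia; simpl.
    + pose proof (Hs 3 ltac:(lia) ltac:(lia)). simpl in *. apply opp_sym; auto.
    + pose proof (Hs 2 ltac:(lia) ltac:(lia)). simpl in *. apply opp_sym; auto.
    + pose proof (Hs 1 ltac:(lia) ltac:(lia)). simpl in *. apply opp_sym; auto.
  - simpl. auto.
Qed.

Lemma dist4_intro : forall u v, pt u = true -> pt v = true -> u <> v ->
  (forall Y, ~ (adj u Y /\ adj Y v)) -> (exists w, w 0 = u /\ w 4 = v /\ is_walk adj 4 w) ->
  dist adj u v 4.
Proof.
  intros u v Pu Pv Huv NC Hw. split; auto.
  intros m' Hm' [w [H0 [Hm Hw']]]. destruct m' as [|[|[|[|]]]]; try lia.
  - apply Huv; congruence.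
  - pose proof (Hw' 0 ltac:(lia)) as A. rewrite H0, Hm in A.
    pose proof (ptF _ _ A Pu). congruence.
  - apply (NC (w 1)); split; [rewrite <- H0; apply Hw'; lia| rewrite <- Hm; apply Hw'; lia].
  - assert (P1 : pt (w 1) = false) by (apply (ptF u); auto; rewrite <- H0; apply Hw'; lia).
    assert (P2 : pt (w 2) = true) by (apply (ptT (w 1)); auto; apply Hw'; lia).
    assert (P3 : pt (w 3) = false) by (apply (ptF (w 2)); auto; apply Hw'; lia).
    congruence.
Qed.

Lemma dist2_intro : forall u v T, pt u = true -> pt v = true -> u <> v -> adj u T -> adj T v ->
  dist adj u v 2.
Proof.
  intros u v T Pu Pv Huv H1 H2. split.
  - exists (p3 u T v). split; [reflexivity|split; [reflexivity|]].
    intros i Hi. destruct i as [|[|]]; simpl; auto; lia.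
  - intros m' Hm' [w [H0 [Hm Hw']]]. destruct m' as [|[|]]; try lia.
    + apply Huv; congruence.
    + pose proof (Hw' 0 ltac:(lia)) as A. rewrite H0, Hm in A.
      pose proof (ptF _ _ A Pu). congruence.
Qed.

Lemma dist2_info : forall x a, dist adj x a 2 -> exists N, adj x N /\ adj N a /\ x <> a.
Proof.
  intros x a [[w [H0 [H2 Hw]]] Hmin]. exists (w 1). split; [|split].
  - rewrite <- H0; apply Hw; lia.
  - rewrite <- H2; apply Hw; lia.
  - intro E. apply (Hmin 0 ltac:(lia)). exists (fun _ => x). split; auto. split; auto.
    intros i Hi; lia.
Qed.

Lemma GenD : forall a b x N, pt a = true -> dist adj a b 4 -> ~ opposite adj opp 4 a b ->
  adj x N -> adj N a -> x <> a -> exists T, adj x T /\ adj T b.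
Proof.
  intros a b x N Pa Hd NO H1 H2 H3.
  destruct (dist4_info _ _ Hd) as (L & c & M & A1 & A2 & A3 & A4 & N1 & N2 & NC & _).
  eapply Gen; eauto.
Qed.

Lemma Part2 : forall a b x, pt a = true -> pt b = true -> dist adj a b 4 ->
  ~ opposite adj opp 4 a b -> dist adj x a 2 -> dist adj x b 2.
Proof.
  intros a b x Pa Pb Hd NO Hx.
  destruct (dist2_info _ _ Hx) as (N & H1 & H2 & H3).
  destruct (GenD _ _ _ _ Pa Hd NO H1 H2 H3) as (T & T1 & T2).
  destruct (dist4_info _ _ Hd) as (L & c & M & _ & _ & _ & _ & _ & _ & NC & _).
  assert (PN : pt N = false) by (apply (ptF a); auto; apply adj_sym; auto).
  assert (Px : pt x = true) by (apply (ptT N); auto; apply adj_sym; auto).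
  apply (dist2_intro _ _ T Px Pb); auto.
  intro E. subst. apply (NC N). split; apply adj_sym; auto.
Qed.

Lemma Part1 : forall a b x, pt a = true -> pt b = true -> dist adj a b 4 ->
  ~ opposite adj opp 4 a b -> opposite adj opp 4 a x -> opposite adj opp 4 b x.
Proof.
  intros a b x Pa Pb Hd NO Hax. pose proof Hax as [r [[[Hw Hnb] Hs] [H0 H4]]].
  apply NNPP; intro NOb.
  assert (e0 : adj a (r 1)) by (rewrite <- H0; apply Hw; lia).
  assert (e1 : adj (r 1) (r 2)) by (apply Hw; lia).
  assert (e2 : adj (r 2) (r 3)) by (apply Hw; lia).
  assert (e3 : adj (r 3) x) by (rewrite <- H4; apply Hw; lia).
  assert (n0 : a <> r 2) by (pose proof (Hnb 2 ltac:(lia)); simpl in *; congruence).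
  assert (n1 : r 1 <> r 3) by (pose proof (Hnb 3 ltac:(lia)); simpl in *; congruence).
  assert (n2 : r 2 <> x) by (pose proof (Hnb 4 ltac:(lia)); simpl in *; congruence).
  assert (o : opp (r 2) (r 1) (r 3)) by (pose proof (Hs 2 ltac:(lia) ltac:(lia)); simpl in *; auto).
  set (N := r 1) in *. set (p := r 2) in *. set (K := r 3) in *. clearbody N p K.
  destruct (dist4_info _ _ Hd) as (L & c & M & _ & _ & _ & _ & _ & _ & NCab & nab).
  assert (PN : pt N = false) by (apply (ptF a); auto).
  assert (Pp : pt p = true) by (apply (ptT N); auto).
  assert (PK : pt K = false) by (apply (ptF p); auto).
  assert (Px : pt x = true) by (apply (ptT K); auto).
  assert (nax : a <> x) by (apply (root_neq _ _ _ _ _ e0 e1 e2 e3 n0 n1 Pa)).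
  destruct (GenD _ _ _ _ Pa Hd NO (adj_sym _ _ e1) (adj_sym _ _ e0) (not_eq_sym n0)) as (B & B1 & B2).
  destruct (plump2 N a p (adj_sym _ _ e0) e1) as (y & Ny & oy1 & oy2).
  assert (nya : y <> a) by (eapply opp_neq; eauto).
  assert (nyp : y <> p) by (eapply opp_neq; eauto).
  destruct (GenD _ _ _ _ Pa Hd NO (adj_sym _ _ Ny) (adj_sym _ _ e0) nya) as (T1 & T11 & T12).
  assert (nxb : x <> b) by (intro E; apply NO; rewrite <- E; auto).
  assert (NCbx : forall Y, ~ (adj b Y /\ adj Y x)).
  { intros Y [Y1 Y2].
    destruct (GenD _ _ _ _ Pb (dist_sym _ _ _ Hd) (fun H => NO (opposite_sym _ _ H)) (adj_sym _ _ Y2) (adj_sym _ _ Y1) nxb)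
      as (T2 & T21 & T22).
    apply (L1 _ _ _ _ _ _ e0 e1 e2 e3 n0 n1 n2 o Pa nax (adj_sym _ _ T22) (adj_sym _ _ T21)). }
  assert (Hdbx : dist adj b x 4).
  { apply dist4_intro; auto.
    exists (p5 b B p K x). split; [reflexivity|split; [reflexivity|]].
    intros i Hi. destruct i as [|[|[|[|]]]]; simpl; try lia; auto using adj_sym. }
  assert (nyb : y <> b) by (intro E; subst; apply (NCab N); auto).
  destruct (GenD _ _ _ _ Pb Hdbx NOb T11 T12 nyb) as (T3 & T31 & T32).
  assert (Py : pt y = true) by (apply (ptT N); auto).
  assert (nyx : y <> x) by (apply (root_neq _ _ _ _ _ (adj_sym _ _ Ny) e1 e2 e3 nyp n1 Py)).
  apply (L1 _ _ _ _ _ _ (adj_sym _ _ Ny) e1 e2 e3 nyp n1 n2 o Py nyx T31 T32).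
Qed.

Lemma main_sec : forall a b, pt a = true -> pt b = true -> dist adj a b 4 ->
  ~ opposite adj opp 4 a b ->
  (forall x, opposite adj opp 4 a x <-> opposite adj opp 4 b x) /\
  (forall x, dist adj x a 2 <-> dist adj x b 2).
Proof.
  intros a b Pa Pb Hd NO.
  assert (Hd' := dist_sym _ _ _ Hd).
  assert (NO' : ~ opposite adj opp 4 b a) by (intro H; apply NO; apply opposite_sym; auto).
  split; intros x; split; intros H.
  - apply (Part1 _ _ _ Pa Pb Hd NO H).
  - apply (Part1 _ _ _ Pb Pa Hd' NO' H).
  - apply (Part2 _ _ _ Pa Pb Hd NO H).
  - apply (Part2 _ _ _ Pb Pa Hd' NO' H).
Qed.
End Main.

Theorem proposition3p7 (V : Type) (adj : V -> V -> Prop) (opp : V -> V -> V -> Prop)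
    (pt : V -> bool) :
  veldkamp_ngon adj opp 4 -> bipartition adj pt -> green adj opp pt ->
  forall a b : V, pt a = true -> pt b = true ->
    dist adj a b 4 -> ~ opposite adj opp 4 a b ->
    (forall x, opposite adj opp 4 a x <-> opposite adj opp 4 b x) /\
    (forall x, dist adj x a 2 <-> dist adj x b 2).
Proof.
  intros HV Hbip Hgr a b Pa Pb Hd NO.
  exact (@main_sec V adj opp pt HV Hbip Hgr _ _ Pa Pb Hd NO).
Qed.
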